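(* Let $s\in(1,2]$ and let $f_1,\dots,f_n\in\overline{B}_s[0,1]$ be linearly independent with $\operatorname{span}\{f_i\}_{i=1}^n\subseteq\overline{B}_s[0,1]\cup\{0\}$. Then there exists a nonempty open interval $I\subset[0,1]$ such that for every $(a_1,\dots,a_n)\in\mathbb{R}^n\setminus\{(0,\dots,0)\}$, $\overline{\dim}_B G_{\sum_{i=1}^n a_if_i}([0,1]\setminus I)=s$, i.e. $\big(\sum_{i=1}^n a_if_i\big)|_{[0,1]\setminus I}\in\overline{B}_s([0,1]\setminus I)$.
   Context: $C[0,1]$ is the space of real-valued continuous functions on $[0,1]$; $G_f(E)=\{(x,f(x)):x\in E\}$; $\overline{\dim}_B$ is upper box dimension. For $E\subseteq[0,1]$, $\overline{B}_s(E)$ is the set of bounded continuous real functions $f$ on $E$ with $\overline{\dim}_B G_f(E)=s$; in particular $\overline{B}_s[0,1]=\{f\in C[0,1]:\overline{\dim}_B G_f([0,1])=s\}$. *)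

(* Defs.v *)
From HB Require Import structures.
From mathcomp Require Import all_boot all_order all_algebra.
From mathcomp Require Import all_classical all_reals all_analysis.
From mathcomp Require Import finmap.
Set Implicit Arguments. Unset Strict Implicit. Unset Printing Implicit Defensive.
Import Order.TTheory GRing.Theory Num.Theory.
Import numFieldNormedType.Exports.
Local Open Scope classical_set_scope.
Local Open Scope ring_scope.

Definition graph_on {R : realType} (f : R -> R) (E : set R) : set (R * R) :=
  [set (x, f x) | x in E].

Definition mesh_square {R : realType} (delta : R) (mk : int * int) : set (R * R) :=
  [set p | (mk.1%:~R * delta <= p.1 <= (mk.1 + 1)%:~R * delta) /\
           (mk.2%:~R * delta <= p.2 <= (mk.2 + 1)%:~R * delta)].

(* N_delta(F): the number of delta-mesh squares meeting F
   (finite when F is bounded). *)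
Definition mesh_count {R : realType} (F : set (R * R)) (delta : R) : nat :=
  (#|` fset_set [set mk : int * int | mesh_square delta mk `&` F !=set0] |)%fset.

Definition upper_box_dim {R : realType} (F : set (R * R)) : \bar R :=
  limf_esup (fun delta : R => ((ln (mesh_count F delta)%:R) / (- ln delta))%:E)
            (at_right 0).

Definition upper_Bs01 {R : realType} (s : R) (f : R -> R) : Prop :=
  {within `[0, 1], continuous f} /\ upper_box_dim (graph_on f `[0, 1]) = s%:E.

Definition lin_comb {R : realType} (n : nat) (a : 'I_n -> R) (f : 'I_n -> R -> R)
  : R -> R := fun x => \sum_(i < n) a i * f i x.

(* Main.v *)
Require Import Defs.
From HB Require Import structures.
From mathcomp Require Import all_boot all_order all_algebra.
From mathcomp Require Import all_classical all_reals all_analysis.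
From mathcomp Require Import finmap.
From mathcomp Require Import zify ring lra.
Set Implicit Arguments. Unset Strict Implicit. Unset Printing Implicit Defensive.
Import Order.TTheory GRing.Theory Num.Theory.
Import numFieldNormedType.Exports.
Local Open Scope classical_set_scope.
Local Open Scope ring_scope.


Section IntI.
Variable R : realType.
Definition IntI (a b : R) : set int := [set k : int | a <= k%:~R <= b].

Lemma IntIE (a b : R) : IntI a b = [set k : int | Num.ceil a <= k <= Num.floor b].
Proof.
apply/seteqP; split => k /=.
  by move=> /andP[ak kb]; rewrite real_ceil_le_int ?num_real // real_floor_ge_int ?num_real // ak kb.
by rewrite real_ceil_le_int ?num_real // real_floor_ge_int ?num_real.
Qed.

Lemma card_II_nat N : #|` fset_set (`I_N)| = N.
Proof. by apply: card_fset_set; apply/card_eq_II. Qed.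

Lemma IntI_img (p q : int) : p <= q ->
  [set k : int | p <= k <= q] = (fun i : nat => p + i%:Z) @` `I_(absz (q - p + 1)%R).
Proof.
move=> pq; apply/seteqP; split => k /=.
  move=> /andP[pk kq]; exists `|k - p|%N; first by rewrite /=; lia.
  lia.
move=> [i /= iN <-]; apply/andP; split; lia.
Qed.

Lemma IntI_fin a b : finite_set (IntI a b).
Proof.
rewrite IntIE; have [pq|qp] := leP (Num.ceil a) (Num.floor b).
  by rewrite IntI_img //; apply: finite_image; apply: finite_II.
suff -> : [set k : int | Num.ceil a <= k <= Num.floor b] = set0 by [].
apply/seteqP; split => k //= /andP[h1 h2].
by have := lt_le_trans qp (le_trans h1 h2); rewrite ltxx.
Qed.

Lemma IntI_card (a b : R) :
  b - a - 1 <= (#|` fset_set (IntI a b)|)%:R /\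
  (a <= b + 1 -> (#|` fset_set (IntI a b)|)%:R <= b - a + 1).
Proof.
have ca := real_ceil_itv (num_real a).
have fb := real_floor_itv (num_real b).
move: ca fb => /andP[ca1 ca2] /andP[fb1 fb2].
move: ca1 fb2; rewrite intrB intrD => ca1 fb2.
rewrite IntIE; have [pq|qp] := leP (Num.ceil a) (Num.floor b).
  rewrite IntI_img // fset_set_image; last exact: finite_II.
  rewrite card_imfset /=; last by move=> i j /= /addrI [].
  rewrite card_II_nat pmulrn gez0_abs; last by lia.
  rewrite !intrD intrN; split; [lra | move=> _; lra].
suff -> : [set k : int | Num.ceil a <= k <= Num.floor b] = set0.
  rewrite fset_set0 cardfs0; split; last by move=> h; lra.
  have : (Num.floor b + 1)%:~R <= (Num.ceil a)%:~R :> R by rewrite ler_int; lia.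
  rewrite intrD; lra.
apply/seteqP; split => k //= /andP[h1 h2].
by have := lt_le_trans qp (le_trans h1 h2); rewrite ltxx.
Qed.
End IntI.


Section Count.
Variable R : realType.
Implicit Types (F : set (R * R)) (d : R).

Definition Sq F d := [set mk : int * int | mesh_square d mk `&` F !=set0].

Lemma mesh_countE F d : mesh_count F d = #|` fset_set (Sq F d)|.
Proof. by []. Qed.

Lemma idx_bound d (B x : R) (m : int) : 0 < d -> `|x| <= B ->
  m%:~R * d <= x <= (m + 1)%:~R * d -> IntI (- B / d - 1) (B / d) m.
Proof.
move=> d0 xB /andP[h1 h2]; rewrite /IntI /=.
move: h2; rewrite intrD mulrDl mul1r => h2.
have hx : - B <= x <= B by rewrite -ler_norml.
apply/andP; split.
  rewrite lerBlDr ler_pdivrMr // mulrDl mul1r; lra.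
rewrite ler_pdivlMr //; lra.
Qed.

Lemma Sq_fin F d (B : R) : 0 < d ->
  F `<=` [set p | `|p.1| <= B /\ `|p.2| <= B] -> finite_set (Sq F d).
Proof.
move=> d0 FB.
apply: (@sub_finite_set _ _ (IntI (- B / d - 1) (B / d) `*` IntI (- B / d - 1) (B / d))).
  move=> [m k] [p [[/= h1 h2] /FB [b1 b2]]]; split => /=.
    exact: (idx_bound d0 b1 h1).
  exact: (idx_bound d0 b2 h2).
by apply: finite_setX; apply: IntI_fin.
Qed.

Lemma count_mono F F' d : F `<=` F' -> finite_set (Sq F' d) ->
  (mesh_count F d <= mesh_count F' d)%N.
Proof.
move=> FF' fin'; rewrite !mesh_countE; apply: fsubset_leq_card.
have sub : Sq F d `<=` Sq F' d.
  by move=> mk [p [h1 h2]]; exists p; split => //; apply: FF'.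
rewrite -fset_set_sub //; exact: sub_finite_set fin'.
Qed.

Lemma count_union F F' d : finite_set (Sq F d) -> finite_set (Sq F' d) ->
  (mesh_count (F `|` F') d <= mesh_count F d + mesh_count F' d)%N.
Proof.
move=> f1 f2; rewrite !mesh_countE.
have -> : Sq (F `|` F') d = Sq F d `|` Sq F' d.
  apply/seteqP; split => mk.
    by move=> [p [h [h1|h1]]]; [left|right]; exists p.
  by move=> [[p [h1 h2]]|[p [h1 h2]]]; exists p; split => //; [left|right].
rewrite fset_setU //; exact: leq_card_fsetU.
Qed.

Lemma fsum1 (T : choiceType) (A : set T) : finite_set A ->
  (\sum_(x \in A) 1 = #|` fset_set A|)%N.
Proof. by move=> fA; rewrite fsbig_finite // card_fset_sum1. Qed.

Local Open Scope nat_scope.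
Lemma card_decomp (S : set (int * int)) (M K : set int) :
  finite_set M -> finite_set K -> S `<=` M `*` K ->
  #|` fset_set S| = \sum_(m <- fset_set M) #|` fset_set [set k | S (m, k)]|.
Proof.
move=> fM fK SMK.
have fS : finite_set S by apply: sub_finite_set SMK _; apply: finite_setX.
have fib m : finite_set [set k | S (m, k)].
  by apply: (@sub_finite_set _ _ K) => // k /SMK [].
rewrite -fsum1 // -fsbig_finite //.
rewrite (eq_fsbigr (fun p => (p \in S : nat))); last first.
  by move=> p Sp; rewrite Sp.
rewrite (fsbig_widen S (M `*` K)) //; last first.
  move=> p [_ /= nS]; rewrite /preimage /=.
  by have -> : (p \in S) = false by apply/negbTE; rewrite notin_setE.
rewrite (eq_fsbigr (fun p => ((p.1, p.2) \in S : nat))); last by move=> [].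
rewrite -(@pair_fsbig _ _ _ _ _ M K (fun m k => ((m, k) \in S : nat))) //; apply: eq_fsbigr => m _.
rewrite -fsum1 //.
rewrite -(fsbig_widen [set k | S (m, k)] K); last first.
- move=> k [_ /= nS]; rewrite /preimage /=.
  by have -> : ((m, k) \in S) = false by apply/negbTE; rewrite notin_setE.
- by move=> k /SMK [].
apply: eq_fsbigr => k /set_mem h; by rewrite mem_set.
Qed.
End Count.


Section Column.
Variable R : realType.
Variables (al be d : R).
Hypothesis d0 : 0 < d.

Definition fib (h : R -> R) (m : int) :=
  [set k : int | Sq (graph_on h `[al, be]) d (m, k)].

Definition incol (m : int) (x : R) := (al <= x <= be) /\ (m%:~R * d <= x <= (m + 1)%:~R * d).

Lemma fibE h m k : fib h m k <->
  exists x, incol m x /\ (k%:~R * d <= h x <= (k + 1)%:~R * d).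
Proof.
split.
  move=> [p [[/= h1 h2] [y Hy E]]]; move: h1 h2; rewrite -E /= => h1 h2.
  by exists y; split => //; split => //; move: Hy; rewrite in_itv.
move=> [x [[h1 h2] h3]]; exists (x, h x); split => //.
by exists x => //; rewrite in_itv.
Qed.

Lemma fib_fin h m : finite_set (Sq (graph_on h `[al, be]) d) -> finite_set (fib h m).
Proof.
move=> fS; apply: (@sub_finite_set _ _ (snd @` Sq (graph_on h `[al, be]) d)).
  by move=> k hk; exists (m, k).
exact: finite_image.
Qed.

Lemma claim1 h m lo hi : finite_set (fib h m) -> lo <= hi ->
  (forall x, incol m x -> lo <= h x <= hi) ->
  (#|` fset_set (fib h m)|)%:R <= (hi - lo) / d + 2.
Proof.
move=> ffib lohi hb.
have sub : fib h m `<=` IntI (lo / d - 1) (hi / d).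
  move=> k /fibE [x [ix /andP[k1 k2]]]; have /andP[l1 l2] := hb x ix.
  rewrite /IntI /=; apply/andP; split.
    rewrite lerBlDr ler_pdivrMr //; move: k2; rewrite intrD mulrDl mul1r; lra.
  rewrite ler_pdivlMr //; lra.
have := fsubset_leq_card (eq_ind _ id sub _ (fset_set_sub ffib (IntI_fin _ _))).
rewrite -(ler_nat R) => le1.
have [_ c2] := IntI_card (lo / d - 1) (hi / d).
have e1 : (hi - lo) / d = hi / d - lo / d by rewrite mulrBl.
have e2 : lo / d <= hi / d by rewrite ler_pM2r // invr_gt0.
apply: (le_trans le1); apply: le_trans (c2 _) _; lra.
Qed.

Lemma claim2 f m x1 x2 : finite_set (fib f m) -> x1 <= x2 ->
  incol m x1 -> incol m x2 -> {within `[al, be], continuous f} ->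
  `|f x2 - f x1| <= d * ((#|` fset_set (fib f m)|)%:R + 1).
Proof.
move=> ffib x12 [/andP[a1 b1] /andP[c1 e1]] [/andP[a2 b2] /andP[c2 e2]] cf.
have cf' : {within `[x1, x2], continuous f}.
  apply: continuous_subspaceW cf => y /=; rewrite !in_itv /= => /andP[y1 y2].
  apply/andP; split; lra.
set lo := Num.min (f x1) (f x2); set hi := Num.max (f x1) (f x2).
have sub : IntI (lo / d) (hi / d) `<=` fib f m.
  move=> k /andP[k1 k2]; apply/fibE.
  have kv : Num.min (f x1) (f x2) <= k%:~R * d <= Num.max (f x1) (f x2).
    by move: k1 k2; rewrite /lo /hi ler_pdivrMr // ler_pdivlMr // => -> ->.
  have [c cin fc] := IVT x12 cf' kv.
  move: cin; rewrite in_itv /= => /andP[cc1 cc2].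
  exists c; split; first by split; apply/andP; split; lra.
  rewrite fc intrD mulrDl mul1r; apply/andP; split; lra.
have := fsubset_leq_card (eq_ind _ id sub _ (fset_set_sub (IntI_fin _ _) ffib)).
rewrite -(ler_nat R) => le1.
have [c1' _] := IntI_card (lo / d) (hi / d).
have : hi - lo <= d * ((#|` fset_set (fib f m)|)%:R + 1).
  rewrite -ler_pdivrMl // mulrBr ![d^-1 * _]mulrC; lra.
suff -> : `|f x2 - f x1| = hi - lo by [].
rewrite /hi /lo; case: (leP (f x1) (f x2)) => h12.
  by rewrite ger0_norm; lra.
by rewrite ltr0_norm; lra.
Qed.

Lemma column_bound f g c e m :
  finite_set (fib f m) -> finite_set (fib g m) ->
  finite_set (fib (fun x => c * f x + e * g x) m) ->
  {within `[al, be], continuous f} -> {within `[al, be], continuous g} ->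
  (#|` fset_set (fib (fun x => c * f x + e * g x) m)|)%:R <=
  2 * `|c| * ((#|` fset_set (fib f m)|)%:R + 1) +
  2 * `|e| * ((#|` fset_set (fib g m)|)%:R + 1) + 2.
Proof.
move=> ff fg fh cf cg.
set nf : R := (#|` fset_set (fib f m)|)%:R.
set ng : R := (#|` fset_set (fib g m)|)%:R.
have nf0 : 0 <= nf by [].
have ng0 : 0 <= ng by [].
have hc := normr_ge0 c; have he := normr_ge0 e.
have [[x0 ix0]|none] := pselect (exists x, incol m x); last first.
  suff -> : fib (fun x => c * f x + e * g x) m = set0.
    rewrite fset_set0 cardfs0.
    have : 0 <= `|c| * (nf + 1) by apply: mulr_ge0; lra.
    have : 0 <= `|e| * (ng + 1) by apply: mulr_ge0; lra.
    lra.
  apply/seteqP; split => k // /fibE [x [ix _]]; apply: none; by exists x.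
have clf x : incol m x -> `|f x - f x0| <= d * (nf + 1).
  move=> ix; case: (leP x0 x) => hx.
    exact: claim2.
  by rewrite distrC; apply: claim2 => //; apply: ltW.
have clg x : incol m x -> `|g x - g x0| <= d * (ng + 1).
  move=> ix; case: (leP x0 x) => hx.
    exact: claim2.
  by rewrite distrC; apply: claim2 => //; apply: ltW.
clearbody nf ng.
set W := d * (`|c| * (nf + 1) + `|e| * (ng + 1)).
have W0 : 0 <= W.
  apply: mulr_ge0; first exact: ltW.
  apply: addr_ge0; apply: mulr_ge0; lra.
have hb x : incol m x -> (c * f x0 + e * g x0) - W <= c * f x + e * g x <= (c * f x0 + e * g x0) + W.
  move=> ix; rewrite -ler_distl.
  have -> : c * f x + e * g x - (c * f x0 + e * g x0) = c * (f x - f x0) + e * (g x - g x0) by ring.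
  apply: (le_trans (ler_normD _ _)); rewrite !normrM.
  have := clf x ix; have := clg x ix => h2 h1.
  have : `|c| * `|f x - f x0| <= `|c| * (d * (nf + 1)) by apply: ler_wpM2l.
  have : `|e| * `|g x - g x0| <= `|e| * (d * (ng + 1)) by apply: ler_wpM2l.
  rewrite /W; move=> q1 q2.
  have -> : d * (`|c| * (nf + 1) + `|e| * (ng + 1)) = `|c| * (d * (nf + 1)) + `|e| * (d * (ng + 1)) by ring.
  lra.
have := claim1 fh _ hb; rewrite (_ : (c * f x0 + e * g x0 + W) - (c * f x0 + e * g x0 - W) = 2 * W); last by ring.
move=> /(_ ltac:(lra)); rewrite /W.
have -> : 2 * (d * (`|c| * (nf + 1) + `|e| * (ng + 1))) / d =
   2 * (`|c| * (nf + 1) + `|e| * (ng + 1)) by field; rewrite gt_eqF.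
lra.
Qed.
End Column.


Section Global.
Variable R : realType.

Lemma graph_box (h : R -> R) (al be Bh : R) : 0 <= al -> be <= 1 ->
  (forall x, al <= x <= be -> `|h x| <= Bh) ->
  graph_on h `[al, be] `<=` [set p | `|p.1| <= Num.max 1 Bh /\ `|p.2| <= Num.max 1 Bh].
Proof.
move=> a0 b1 hB p [x xin <-]; move: xin => /=; rewrite in_itv /= => /andP[x1 x2]; split => /=.
  rewrite le_max; apply/orP; left; rewrite ger0_norm; lra.
by rewrite le_max (hB x) ?orbT // x1 x2.
Qed.

Lemma graph_fin (h : R -> R) (al be Bh d : R) : 0 < d -> 0 <= al -> be <= 1 ->
  (forall x, al <= x <= be -> `|h x| <= Bh) ->
  finite_set (Sq (graph_on h `[al, be]) d).
Proof. by move=> d0 a0 b1 hB; apply: Sq_fin d0 (graph_box a0 b1 hB). Qed.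

Lemma sum_aux (I : Type) (r : seq I) (x y : I -> R) (A B : R) :
  \sum_(i <- r) (A * (x i + 1) + B * (y i + 1) + 2) =
  A * \sum_(i <- r) x i + B * \sum_(i <- r) y i + (A + B + 2) * \sum_(i <- r) 1.
Proof.
elim: r => [|i r IH]; first by rewrite !big_nil; ring.
rewrite !big_cons IH; ring.
Qed.

Lemma graph_decomp (h : R -> R) (al be Bh d : R) : 0 < d -> 0 <= al -> be <= 1 ->
  (forall x, al <= x <= be -> `|h x| <= Bh) ->
  (mesh_count (graph_on h `[al, be]) d)%:R =
  \sum_(m <- fset_set (IntI (-1) (1 / d))) (#|` fset_set (fib al be d h m)|)%:R :> R.
Proof.
move=> d0 a0 b1 hB; rewrite mesh_countE.
rewrite (@card_decomp _ (IntI (-1) (1 / d)) (IntI (- Num.max 1 Bh / d - 1) (Num.max 1 Bh / d))).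
- by rewrite natr_sum.
- exact: IntI_fin.
- exact: IntI_fin.
move=> [m k] [p [[/= h1 h2] hp]]; split => /=.
  move: hp => [x xin E]; move: xin => /=; rewrite in_itv /= => /andP[x1 x2]; move: h1; rewrite -E /= => h1.
  rewrite /IntI /=; move: h1 => /andP[h1 h3]; apply/andP; split.
    have : 0 <= (m + 1)%:~R * d by lra.
    by rewrite pmulr_lge0 // intrD; lra.
  rewrite ler_pdivlMr //; lra.
have := graph_box a0 b1 hB hp => -[_ b2].
exact: idx_bound d0 b2 h2.
Qed.


Lemma count_lin (f g : R -> R) (c e al be B d : R) : 0 < d -> 0 <= al -> be <= 1 ->
  (forall x, al <= x <= be -> `|f x| <= B /\ `|g x| <= B) ->
  {within `[al, be], continuous f} -> {within `[al, be], continuous g} ->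
  (mesh_count (graph_on (fun x => c * f x + e * g x) `[al, be]) d)%:R <=
  2 * `|c| * (mesh_count (graph_on f `[al, be]) d)%:R +
  2 * `|e| * (mesh_count (graph_on g `[al, be]) d)%:R +
  (2 * `|c| + 2 * `|e| + 2) * (1 / d + 2) :> R.
Proof.
move=> d0 a0 b1 hB cf cg.
have hf x : al <= x <= be -> `|f x| <= B by move=> /hB [].
have hg x : al <= x <= be -> `|g x| <= B by move=> /hB [].
have hh x : al <= x <= be -> `|c * f x + e * g x| <= `|c| * B + `|e| * B.
  move=> /hB [b1' b2']; apply: (le_trans (ler_normD _ _)); rewrite !normrM.
  by apply: lerD; apply: ler_wpM2l.
rewrite (graph_decomp d0 a0 b1 hf) (graph_decomp d0 a0 b1 hg) (graph_decomp d0 a0 b1 hh).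
have ffi (h : R -> R) Bh : (forall x, al <= x <= be -> `|h x| <= Bh) -> forall m,
    finite_set (fib al be d h m).
  by move=> hb m; apply: fib_fin; apply: graph_fin d0 a0 b1 hb.
apply: le_trans.
  apply: ler_sum => m _.
  exact: (column_bound d0 (ffi _ _ hf m) (ffi _ _ hg m) (ffi _ _ hh m) cf cg).
rewrite sum_aux -!mulrA lerD2l.
have := IntI_card (-1) (1 / d) => -[_ /(_ _)] => h.
have h0 : 0 < 1 / d by rewrite divr_gt0.
have h' : -1 <= 1 / d + 1 by lra.
have := h h'; rewrite card_fset_sum1 natr_sum => hs.
apply: ler_wpM2l; first by have := normr_ge0 c; have := normr_ge0 e; lra.
lra.
Qed.
End Global.


Section Esup.
Variable R : realType.
Local Open Scope ereal_scope.

Lemma esup_mono (F : set_system R) (r1 r2 : R -> \bar R) : Filter F ->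
  (\forall x \near F, r1 x <= r2 x) -> limf_esup r1 F <= limf_esup r2 F.
Proof.
move=> FF ev; rewrite !limf_esupE; apply: le_ereal_inf_tmp => _ [V FV <-].
apply: ge_ereal_inf; exists (ereal_sup (r1 @` (V `&` [set x | r1 x <= r2 x]))).
  by exists (V `&` [set x | r1 x <= r2 x]) => //; apply: filterI.
apply: ge_ereal_sup => _ [x [Vx lex] <-].
by apply: le_trans lex _; apply: ereal_sup_ubound; exists x.
Qed.

Lemma esup_lt (F : set_system R) (r : R -> R) (y : R) : Filter F ->
  limf_esup (fun x => (r x)%:E) F < y%:E -> \forall x \near F, (r x < y)%R.
Proof.
move=> FF; rewrite limf_esupE => /ereal_inf_lt [_ [V FV <-]] lt.
apply: filterS FV => x Vx; rewrite -lte_fin; apply: le_lt_trans lt.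
by apply: ereal_sup_ubound; exists x.
Qed.

Lemma esup_le (F : set_system R) (r : R -> R) (z : R) :
  (\forall x \near F, (r x <= z)%R) -> limf_esup (fun x => (r x)%:E) F <= z%:E.
Proof.
move=> ev; rewrite limf_esupE; apply: ge_ereal_inf.
exists (ereal_sup ((fun x => (r x)%:E) @` [set x | (r x <= z)%R])).
  by exists [set x | (r x <= z)%R].
by apply: ge_ereal_sup => _ [x xz <-]; rewrite lee_fin.
Qed.

Lemma lt_real (x : \bar R) (s : R) : x < s%:E -> exists y : R, (y < s)%R /\ x < y%:E.
Proof.
case: x => [r| |] //=.
- rewrite lte_fin => rs; exists ((r + s) / 2)%R; split; rewrite ?lte_fin; lra.
- by move=> _; exists (s - 1)%R; split; rewrite ?ltNye //; lra.
Qed.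
End Esup.


Section Dim.
Variable R : realType.
Implicit Types F : set (R * R).

Definition ratio F (d : R) : R := ln ((mesh_count F d)%:R) / (- ln d).

Lemma dimE F : upper_box_dim F = limf_esup (fun d => (ratio F d)%:E) 0^'+.
Proof. by []. Qed.

Lemma ln_nat_mono (a b : nat) : (a <= b)%N -> ln (a%:R : R) <= ln b%:R.
Proof.
case: a => [|a] ab.
  rewrite ln0 //; case: b ab => [|b] _; first by rewrite ln0.
  by apply: ln_ge0; rewrite ler1n.
by rewrite ler_ln ?posrE ?ltr0n ?ler_nat // (leq_trans _ ab).
Qed.

Lemma ln_nat_ge0 (a : nat) : 0 <= ln (a%:R : R).
Proof. by case: a => [|a]; [rewrite ln0 | apply: ln_ge0; rewrite ler1n]. Qed.

Lemma near_unit : \forall d \near (0:R)^'+, 0 < d < 1.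
Proof.
near=> d; apply/andP; split; near: d; [exact: nbhs_right_gt | exact: nbhs_right_lt].
Unshelve. all: by end_near.
Qed.

Lemma dim_mono F F' :
  (\forall d \near 0^'+, (mesh_count F d <= mesh_count F' d)%N) ->
  (upper_box_dim F <= upper_box_dim F')%E.
Proof.
move=> ev; rewrite !dimE; apply: esup_mono.
near=> d; rewrite lee_fin /ratio.
have /andP[d0 d1] : 0 < d < 1 by near: d; exact: near_unit.
have L : 0 < - ln d by rewrite oppr_gt0 ln_lt0 // d0 d1.
rewrite ler_pM2r ?invr_gt0 //; apply: ln_nat_mono.
by near: d.
Unshelve. all: by end_near.
Qed.

Lemma nat_le_exp (N : nat) (L y : R) : 0 < L -> ln (N%:R : R) / L < y ->
  (N%:R : R) <= expR (y * L).
Proof.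
move=> L0; case: N => [|N]; first by move=> _; apply: ltW; apply: expR_gt0.
rewrite ltr_pdivrMr // => h; apply: ltW.
rewrite -[X in X < _]lnK ?posrE ?ltr0n //.
by rewrite ltr_expR.
Qed.

Lemma ratio_bound (N : nat) (K T L : R) : 1 <= K -> 1 <= T -> 0 < L ->
  (N%:R : R) <= K * T -> ln (N%:R : R) / L <= ln K / L + ln T / L.
Proof.
move=> K1 T1 L0 NKT; rewrite -mulrDl ler_pM2r ?invr_gt0 //.
have K0 : 0 < K by lra.
have T0 : 0 < T by lra.
case: N NKT => [|N] NKT.
  by rewrite ln0 //; apply: addr_ge0; exact: ln_ge0.
rewrite -lnM ?posrE //.
by rewrite ler_ln ?posrE ?ltr0n ?mulr_gt0.
Qed.
Lemma dim_lt F F1 F2 (A B C s : R) : 1 < s -> 0 <= A -> 0 <= B -> 0 <= C ->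
  (\forall d \near 0^'+, (mesh_count F d)%:R <=
      A * (mesh_count F1 d)%:R + B * (mesh_count F2 d)%:R + C / d) ->
  (upper_box_dim F1 < s%:E)%E -> (upper_box_dim F2 < s%:E)%E ->
  (upper_box_dim F < s%:E)%E.
Proof.
move=> s1 A0 B0 C0 ev h1 h2.
have [y1 [y1s d1]] := lt_real h1.
have [y2 [y2s d2]] := lt_real h2.
set y := Num.max y1 (Num.max y2 ((1 + s) / 2)).
have ys : y < s by rewrite /y !gt_max y1s y2s /=; lra.
have y1y : y1 <= y by rewrite /y le_max lexx.
have y2y : y2 <= y by rewrite /y !le_max lexx orbT.
have yge : (1 + s) / 2 <= y by rewrite /y !le_max lexx !orbT.
have y1' : 1 < y by lra.
have e1 : (upper_box_dim F1 < y%:E)%E by apply: lt_le_trans d1 _; rewrite lee_fin.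
have e2 : (upper_box_dim F2 < y%:E)%E by apply: lt_le_trans d2 _; rewrite lee_fin.
have ev1 := esup_lt _ e1.
have ev2 := esup_lt _ e2.
set K := A + B + C + 1.
set e := (s - y) / 2.
have e0 : 0 < e by rewrite /e; lra.
have K1 : 1 <= K by rewrite /K; lra.
suff : (upper_box_dim F <= (y + e)%:E)%E.
  by move=> /le_lt_trans; apply; rewrite lte_fin /e; lra.
rewrite dimE; apply: esup_le.
near=> d.
have /andP[d0 dlt1] : 0 < d < 1 by near: d; exact: near_unit.
have L : 0 < - ln d by rewrite oppr_gt0 ln_lt0 // d0 dlt1.
have r1 : ratio F1 d < y by near: d; exact: ev1.
have r2 : ratio F2 d < y by near: d; exact: ev2.
have small : ln K / (- ln d) <= e.
  have : d < expR (- (ln K / e)) by near: d; apply: nbhs_right_lt; exact: expR_gt0.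
  rewrite -[X in X < _]lnK ?posrE // ltr_expR => hd.
  rewrite ler_pdivrMr //; rewrite ltrNr ltr_pdivrMr // in hd; lra.
set T := expR (y * - ln d).
have N1 := nat_le_exp L r1.
have N2 := nat_le_exp L r2.
have dT : 1 / d <= T.
  have -> : 1 / d = expR (- ln d) by rewrite -lnV ?posrE // lnK ?posrE ?invr_gt0 // div1r.
  rewrite ler_expR ler_peMl //; lra.
have T1 : 1 <= T by rewrite /T -expR0 ler_expR; apply: mulr_ge0; lra.
have NF : (mesh_count F d)%:R <= K * T.
  have hF : (mesh_count F d)%:R <= A * (mesh_count F1 d)%:R + B * (mesh_count F2 d)%:R + C / d.
    by near: d; exact: ev.
  apply: le_trans hF _; rewrite /K !mulrDl mul1r.
  have : A * (mesh_count F1 d)%:R <= A * T by apply: ler_wpM2l.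
  have : B * (mesh_count F2 d)%:R <= B * T by apply: ler_wpM2l.
  have : C / d <= C * T by apply: ler_wpM2l => //; rewrite -div1r.
  have : 0 <= T by lra.
  lra.
have := ratio_bound K1 T1 L NF.
rewrite /T expRK mulrK; last by rewrite unitfE gt_eqF.
move=> hr.
rewrite /ratio; lra.
Unshelve. all: by end_near.
Qed.
End Dim.


Section Chain.
Variables (K : fieldType) (vT : vectType K).

Record subsp (V : vT -> Prop) := Subsp {
  sub0 : V 0;
  subD : forall x y, V x -> V y -> V (x + y);
  subZ : forall (k : K) x, V x -> V (k *: x) }.

Lemma span_sub (V : vT -> Prop) (X : seq vT) : subsp V ->
  (forall x, x \in X -> V x) -> forall v, v \in <<X>>%VS -> V v.
Proof.
move=> [h0 hD hZ] hX v vX.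
have := @coord_span _ _ _ (in_tuple X) v vX => ->.
apply: (big_ind V) => // i _; apply: hZ; apply: hX.
by apply: mem_nth; exact: ltn_ord.
Qed.

Lemma chain (V : nat -> vT -> Prop) (m : nat) :
  (forall i, subsp (V i)) ->
  (forall i x, V i.+1 x -> V i x) ->
  (forall i, (i < m)%N -> exists a, V i a /\ ~ V i.+1 a) ->
  (m <= \dim (fullv : {vspace vT}))%N.
Proof.
move=> hsub hanti hstr.
have key : forall k, (k <= m)%N -> exists X : seq vT,
    [/\ size X = k, free X & forall x, x \in X -> V (m - k)%N x].
  elim => [|k IH] km.
    by exists [::]; split => //; rewrite nil_free.
  have [X [sX fX VX]] := IH (ltnW km).
  have jm : (m - k.+1 < m)%N by rewrite ltn_subrL; apply/andP; split; [|apply: leq_ltn_trans km].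
  have [a [Va nVa]] := hstr _ jm.
  have eS : (m - k.+1).+1 = (m - k)%N by rewrite subnSK.
  rewrite eS in nVa.
  exists (a :: X); split => //=.
    by rewrite sX.
  rewrite free_cons fX andbT; apply/negP => aX; apply: nVa.
    exact: (span_sub (hsub _) VX).
  move=> x; rewrite inE => /orP[/eqP -> //|xX].
  by apply: hanti; rewrite eS; apply: VX.
have [X [sX fX _]] := key m (leqnn m).
rewrite -sX; move: fX => /eqP <-; exact: dimvS (subvf _).
Qed.
End Chain.


Section Main.
Variable R : realType.

Definition unitI : set R := [set x | 0 <= x <= 1].

Lemma cont_bounded (h : R -> R) : {within `[0, 1], continuous h} ->
  exists B, forall x, 0 <= x <= 1 -> `|h x| <= B.
Proof.
move=> ch.
have [cM _ hM] := EVT_max ler01 ch.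
have [cm _ hm] := EVT_min ler01 ch.
exists (Num.max `|h cM| `|h cm|) => x x01.
have xin : x \in `[(0:R), 1] by rewrite in_itv.
have := hM x xin; have := hm x xin => h1 h2.
rewrite ler_norml; apply/andP; split.
  have : - `|h cm| <= h cm by rewrite lerNnormlW.
  have : `|h cm| <= Num.max `|h cM| `|h cm| by rewrite le_max lexx orbT.
  lra.
have : h cM <= `|h cM| by rewrite ler_norm.
have : `|h cM| <= Num.max `|h cM| `|h cm| by rewrite le_max lexx.
lra.
Qed.

Lemma graph_box' (h : R -> R) (E : set R) (B : R) : E `<=` unitI ->
  (forall x, 0 <= x <= 1 -> `|h x| <= B) ->
  graph_on h E `<=` [set p | `|p.1| <= Num.max 1 B /\ `|p.2| <= Num.max 1 B].
Proof.
move=> EU hB p [x xE <-]; have /andP[x0 x1] := EU _ xE; split => /=.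
  rewrite le_max; apply/orP; left; rewrite ger0_norm //.
by rewrite le_max (hB x) ?orbT // x0 x1.
Qed.

Lemma dim_graph_mono (h : R -> R) (E E' : set R) (B : R) :
  E `<=` E' -> E' `<=` unitI -> (forall x, 0 <= x <= 1 -> `|h x| <= B) ->
  (upper_box_dim (graph_on h E) <= upper_box_dim (graph_on h E'))%E.
Proof.
move=> EE' E'U hB; apply: dim_mono.
near=> d.
have /andP[d0 d1] : 0 < d < 1 by near: d; exact: near_unit.
apply: count_mono.
  by move=> p [x xE <-]; exists x => //; apply: EE'.
exact: Sq_fin d0 (graph_box' E'U hB).
Unshelve. all: by end_near.
Qed.

Lemma itv_unit (a b : R) : 0 <= a -> b <= 1 -> [set` `[a, b]] `<=` unitI.
Proof. by move=> a0 b1 x /=; rewrite in_itv /= => /andP[h1 h2]; rewrite /unitI /=; apply/andP; split; lra. Qed.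

Lemma dim_sum (f g : R -> R) (c e t s : R) (B : R) : 1 < s -> 0 <= t <= 1 ->
  {within `[0, 1], continuous f} -> {within `[0, 1], continuous g} ->
  (forall x, 0 <= x <= 1 -> `|f x| <= B /\ `|g x| <= B) ->
  (upper_box_dim (graph_on f `[0%R, t]) < s%:E)%E ->
  (upper_box_dim (graph_on g `[0%R, t]) < s%:E)%E ->
  (upper_box_dim (graph_on (fun x => (c * f x + e * g x)%R) `[0%R, t]) < s%:E)%E.
Proof.
move=> s1 /andP[t0 t1] cf cg hB df dg.
have sub : [set` `[0, t]] `<=` [set` `[(0:R), 1]].
  by move=> x /=; rewrite !in_itv /= => /andP[h1 h2]; apply/andP; split; lra.
have cf' := continuous_subspaceW sub cf.
have cg' := continuous_subspaceW sub cg.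
have hB' x : 0 <= x <= t -> `|f x| <= B /\ `|g x| <= B.
  by move=> /andP[h1 h2]; apply: hB; apply/andP; split; lra.
have hc := normr_ge0 c; have he := normr_ge0 e.
apply: (@dim_lt _ _ (graph_on f `[0, t]) (graph_on g `[0, t]) (2 * `|c|) (2 * `|e|) (3 * (2 * `|c| + 2 * `|e| + 2))) => //.
near=> d.
have /andP[d0 d1] : 0 < d < 1 by near: d; exact: near_unit.
apply: le_trans (count_lin c e d0 (lexx 0) t1 hB' cf' cg') _.
rewrite lerD2l.
have -> : 3 * (2 * `|c| + 2 * `|e| + 2) / d = (2 * `|c| + 2 * `|e| + 2) * (3 * (1 / d)) by ring.
apply: ler_wpM2l; first lra.
have : 1 <= 1 / d by rewrite ler_pdivlMr // mul1r; lra.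
lra.
Unshelve. all: by end_near.
Qed.

Lemma dim_union (h : R -> R) (t s B : R) : 1 < s -> 0 <= t <= 1 ->
  (forall x, 0 <= x <= 1 -> `|h x| <= B) ->
  (upper_box_dim (graph_on h `[0%R, t]) < s%:E)%E ->
  (upper_box_dim (graph_on h `[t, 1%R]) < s%:E)%E ->
  (upper_box_dim (graph_on h `[0%R, 1%R]) < s%:E)%E.
Proof.
move=> s1 /andP[t0 t1] hB d1 d2.
apply: (@dim_lt _ _ (graph_on h `[0, t]) (graph_on h `[t, 1]) 1 1 0) => //.
near=> d.
have /andP[d0 dlt] : 0 < d < 1 by near: d; exact: near_unit.
rewrite !mul1r mul0r addr0 -natrD ler_nat.
have f1 : finite_set (Sq (graph_on h `[0, t]) d).
  exact: Sq_fin d0 (graph_box' (itv_unit (lexx 0) t1) hB).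
have f2 : finite_set (Sq (graph_on h `[t, 1]) d).
  exact: Sq_fin d0 (graph_box' (itv_unit t0 (lexx 1)) hB).
apply: leq_trans (count_union f1 f2).
apply: count_mono.
  move=> p [x]; rewrite /= in_itv /= => /andP[x0 x1] <-.
  case: (leP x t) => xt; [left|right]; exists x => //=; rewrite in_itv /=; apply/andP; split => //; lra.
have -> : Sq (graph_on h `[0, t] `|` graph_on h `[t, 1]) d =
          Sq (graph_on h `[0, t]) d `|` Sq (graph_on h `[t, 1]) d.
  apply/seteqP; split => mk.
    by move=> [p [hp [h1|h1]]]; [left|right]; exists p.
  by move=> [[p [h1 h2]]|[p [h1 h2]]]; exists p; split => //; [left|right].
by rewrite finite_setU.
Unshelve. all: by end_near.
Qed.

End Main.


Theorem proposition4p1 (R : realType) (s : R) (n : nat) (f : 'I_n -> R -> R) :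
  1 < s <= 2 ->
  (forall i, upper_Bs01 s (f i)) ->
  (* linear independence in C[0,1] *)
  (forall a : 'I_n -> R,
      (forall x, x \in `[0, 1] -> lin_comb a f x = 0) -> forall i, a i = 0) ->
  (* span{f_i} is contained in \overline{B}_s[0,1] \cup {0} *)
  (forall a : 'I_n -> R,
      upper_Bs01 s (lin_comb a f) \/ (forall x, x \in `[0, 1] -> lin_comb a f x = 0)) ->
  exists u v : R, [/\ 0 <= u, u < v, v <= 1 &
    forall a : 'I_n -> R, (exists i, a i != 0) ->
      upper_box_dim (graph_on (lin_comb a f) (`[0, 1] `\` `]u, v[)) = s%:E].
Proof.
move=> /andP[s1 s2] hf hind hspan.
pose comb (v : 'rV[R]_n) := lin_comb (fun i => v ord0 i) f.
have comb_nz (v : 'rV[R]_n) : v != 0 -> upper_Bs01 s (comb v).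
  move=> v0; case: (hspan (fun i => v ord0 i)) => // hz.
  exfalso; move/eqP: v0; apply; apply/matrixP => i j; rewrite mxE (ord1 i).
  exact: hind _ hz j.
have comb_bd (v : 'rV[R]_n) : v != 0 -> exists B : R, forall x : R, 0 <= x <= 1 -> `|comb v x| <= B.
  by move=> /comb_nz [c _]; apply: cont_bounded.
have combD (v w : 'rV[R]_n) : comb (v + w) = (fun x => 1 * comb v x + 1 * comb w x).
  apply: funext => x; rewrite /comb /lin_comb !mul1r -big_split /=.
  by apply: eq_bigr => i _; rewrite mxE mulrDl.
have combZ (k : R) (v : 'rV[R]_n) : comb (k *: v) = (fun x => k * comb v x + 0 * comb v x).
  apply: funext => x; rewrite mul0r addr0 /comb /lin_comb mulr_sumr.
  by apply: eq_bigr => i _; rewrite mxE mulrA.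
pose W (t : R) (v : 'rV[R]_n) :=
  v = 0 \/ (upper_box_dim (graph_on (comb v) `[0%R, t]) < s%:E)%E.
have dsum (v w : 'rV[R]_n) (c e t : R) : v != 0 -> w != 0 -> 0 <= t <= 1 ->
    (upper_box_dim (graph_on (comb v) `[0%R, t]) < s%:E)%E ->
    (upper_box_dim (graph_on (comb w) `[0%R, t]) < s%:E)%E ->
    (upper_box_dim (graph_on (fun x => (c * comb v x + e * comb w x)%R) `[0%R, t]) < s%:E)%E.
  move=> v0 w0 t01 dv dw.
  have [cv _] := comb_nz v v0; have [cw _] := comb_nz w w0.
  have [Bv hBv] := comb_bd v v0; have [Bw hBw] := comb_bd w w0.
  apply: (@dim_sum _ _ _ _ _ _ _ (Num.max Bv Bw)) => // x x01; split.
    by apply: le_trans (hBv x x01) _; rewrite le_max lexx.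
  by apply: le_trans (hBw x x01) _; rewrite le_max lexx orbT.
have Wsub (t : R) : 0 <= t <= 1 -> subsp (W t).
  move=> t01; split.
  - by left.
  - move=> v w [->|dv]; first by rewrite add0r.
    move=> [->|dw]; first by rewrite addr0; right.
    have [->|vw0] := eqVneq (v + w) 0; first by left.
    have [->|v0] := eqVneq v 0; first by rewrite add0r; right.
    have [->|w0] := eqVneq w 0; first by rewrite addr0; right.
    by right; rewrite combD; apply: dsum.
  - move=> k v [->|dv]; first by rewrite scaler0; left.
    have [->|kv0] := eqVneq (k *: v) 0; first by left.
    have [->|v0] := eqVneq v 0; first by rewrite scaler0; left.
    by right; rewrite combZ; apply: dsum.
pose tt (i : nat) : R := Num.min 1 (i%:R / n.+1%:R).
have tt01 i : 0 <= tt i <= 1.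
  rewrite /tt; apply/andP; split; last by rewrite ge_min lexx.
  by rewrite le_min ler01 divr_ge0.
have ttE i : (i <= n.+1)%N -> tt i = i%:R / n.+1%:R.
  move=> ile; rewrite /tt; apply/min_idPr.
  by rewrite ler_pdivrMr ?ltr0n // mul1r ler_nat.
have ttmono i : tt i <= tt i.+1.
  rewrite /tt le_min ge_min lexx /= ge_min; apply/orP; right.
  by rewrite ler_pM2r ?invr_gt0 ?ltr0n // ler_nat.
have Wanti (i : nat) (v : 'rV[R]_n) : W (tt i.+1) v -> W (tt i) v.
  move=> [->|dv]; first by left.
  have [->|v0] := eqVneq v 0; first by left.
  right; apply: le_lt_trans dv.
  have [B hB] := comb_bd v v0.
  have /andP[a0 a1] := tt01 i.+1.
  apply: (dim_graph_mono _ (itv_unit (lexx 0) a1) hB).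
  move=> x /=; rewrite !in_itv /= => /andP[h1 h2]; apply/andP; split => //.
  exact: le_trans h2 (ttmono i).
have [i [ilt hi]] : exists i, (i < n.+1)%N /\ forall v, W (tt i) v -> W (tt i.+1) v.
  apply: contrapT => hno.
  have := @chain _ _ (fun i => W (tt i)) n.+1 (fun i => Wsub _ (tt01 i)) Wanti.
  rewrite dimvf dim_matrix mul1r ltnn => H.
  have prem : forall i, (i < n.+1)%N -> exists a, W (tt i) a /\ ~ W (tt i.+1) a.
    move=> i ilt; apply: contrapT => h; apply: hno; exists i; split; first exact: ilt.
    move=> v Wv; apply: contrapT => nW; apply: h.
    exists v; split; [exact: Wv | exact: nW].
  by have := H prem.
have /andP[u0 u1] := tt01 i.
have /andP[v0 v1] := tt01 i.+1.
have uv : tt i < tt i.+1.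
  rewrite (ttE i (ltnW ilt)) (ttE i.+1 ilt).
  by rewrite ltr_pM2r ?invr_gt0 ?ltr0n // ltr_nat.
exists (tt i), (tt i.+1); split => // a [j aj].
pose vv : 'rV[R]_n := \row_k a k.
have vv0 : vv != 0.
  apply/eqP => h; have := congr1 (fun M : 'rV[R]_n => M ord0 j) h.
  by rewrite !mxE => ha; rewrite ha eqxx in aj.
have -> : lin_comb a f = comb vv.
  by apply: funext => x; rewrite /comb /lin_comb; apply: eq_bigr => k _; rewrite mxE.
have [cvv dvv] := comb_nz vv vv0.
have [B hB] := comb_bd vv vv0.
set E := `[0, 1] `\` `]tt i, tt i.+1[.
have EU : E `<=` (@unitI R).
  by move=> x [] /=; rewrite in_itv /= => /andP[h1 h2] _; rewrite /unitI /=; apply/andP; split.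
have sub01 : E `<=` [set` `[(0:R), 1]] by move=> x [].
apply/eqP; rewrite eq_le; apply/andP; split.
  rewrite -dvv; exact: (dim_graph_mono sub01 (itv_unit (lexx 0) (lexx 1)) hB).
have [du|du] := boolP (upper_box_dim (graph_on (comb vv) `[0%R, tt i]) < s%:E)%E.
  have : W (tt i.+1) vv by apply: hi; right.
  move=> [vz|dv]; first by rewrite vz eqxx in vv0.
  have dv1 : ~~ (upper_box_dim (graph_on (comb vv) `[tt i.+1, 1%R]) < s%:E)%E.
    apply/negP => d2.
    have := dim_union s1 (tt01 i.+1) hB dv d2.
    by rewrite dvv ltxx.
  rewrite -leNgt in dv1; apply: le_trans dv1 _.
  apply: (dim_graph_mono _ EU hB).
  move=> x /=; rewrite in_itv /= => /andP[h1 h2]; split => /=.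
    rewrite in_itv /=; apply/andP; split => //; exact: le_trans v0 h1.
  by rewrite in_itv /= => /andP[_ h3]; move: (lt_le_trans h3 h1); rewrite ltxx.
rewrite -leNgt in du; apply: le_trans du _.
apply: (dim_graph_mono _ EU hB).
move=> x /=; rewrite in_itv /= => /andP[h1 h2]; split => /=.
  rewrite in_itv /=; apply/andP; split => //; exact: le_trans h2 u1.
by rewrite in_itv /= => /andP[h3 _]; move: (le_lt_trans h2 h3); rewrite ltxx.
Qed.
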